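(* Assume the Continuum Hypothesis. Let $X$ be a real Banach space with $\operatorname{dens} X = \operatorname{dens} X^* = \omega_1$, and let $C \subseteq X$. If $C$ cannot be covered by countably many hyperplanes of $X$, then $C$ contains an overcomplete set for $X$.
   Context: A hyperplane of a Banach space $X$ is a closed linear subspace of codimension one, i.e. the kernel of a non-zero bounded linear functional. $\operatorname{dens}$ denotes the density character. A subset $S$ of a Banach space $X$ with $|S| = \operatorname{dens} X$ is called overcomplete (for $X$) if every subset $\Lambda \subseteq S$ with $|\Lambda| = |S|$ is linearly dense in $X$ (its closed linear span is $X$). *)

(* Defs.v *)
From HB Require Import structures.
From mathcomp Require Import all_boot all_order all_algebra.
From mathcomp Require Import all_classical all_reals all_analysis.
Set Implicit Arguments. Unset Strict Implicit. Unset Printing Implicit Defensive.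
Import Order.TTheory GRing.Theory Num.Theory.
Import numFieldNormedType.Exports.
Local Open Scope classical_set_scope.
Local Open Scope ring_scope.
Local Open Scope card_scope.

Definition CH (R : realType) : Prop :=
  forall A : set R, countable A \/ A #= [set: R].

(* |A| = aleph_1: A is uncountable and every uncountable subset of A is
   equinumerous with A (in ZFC this holds iff |A| = aleph_1). *)
Definition card_aleph1 (T : Type) (A : set T) : Prop :=
  ~ countable A /\ forall B, B `<=` A -> ~ countable B -> B #= A.

Section Banach.
Variables (R : realType) (X : normedModType R).

Definition bounded_linear_functional (f : X -> R) : Prop :=
  (forall (a : R) (x y : X), f (a *: x + y) = a * f x + f y) /\
  exists M : R, forall x : X, `|f x| <= M * `|x|.

Definition dens_aleph1 : Prop :=
  (exists D : set X, closure D = setT /\ card_aleph1 D) /\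
  ~ (exists D : set X, closure D = setT /\ countable D).

Definition dual_dense (D : set (X -> R)) : Prop :=
  D `<=` bounded_linear_functional /\
  forall f, bounded_linear_functional f -> forall e : R, 0 < e ->
    exists2 g, D g & forall x : X, `|f x - g x| <= e * `|x|.

Definition dual_dens_aleph1 : Prop :=
  (exists D, dual_dense D /\ card_aleph1 D) /\
  ~ (exists D, dual_dense D /\ countable D).

Definition hyperplane (H : set X) : Prop :=
  exists f, bounded_linear_functional f /\ (exists x, f x != 0) /\
    H = [set x | f x = 0].

Definition lin_span (S : set X) : set X :=
  [set x | exists n (v : 'I_n -> X) (c : 'I_n -> R),
      (forall i, S (v i)) /\ x = \sum_(i < n) c i *: v i].

Definition linearly_dense (S : set X) : Prop := closure (lin_span S) = setT.

(* overcomplete set, given dens X = aleph_1 (so |S| = dens X means |S| = aleph_1) *)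
Definition overcomplete (S : set X) : Prop :=
  card_aleph1 S /\
  forall L, L `<=` S -> L #= S -> linearly_dense L.

End Banach.

(* Main.v *)
Require Import Defs.
From mathcomp Require Import all_boot all_order all_algebra.
From mathcomp Require Import all_classical all_reals all_analysis.
From mathcomp Require Import wochoice.
From mathcomp Require Import ring lra.
Import numFieldNormedType.Exports.
Import Order.TTheory GRing.Theory Num.Theory.
Local Open Scope classical_set_scope.
Local Open Scope ring_scope.
Section Card1.
Variable R : realType.
Local Notation w := ((3 : R)^-1).

Fixpoint cs (b : nat -> bool) (n : nat) : R :=
  if n is m.+1 then cs b m + (b m)%:R * w ^+ m else 0.

Lemma w_gt0 : 0 < w. Proof. by rewrite invr_gt0. Qed.

Lemma cs_mono b n j : cs b n <= cs b (n + j)%N.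
Proof.
elim: j => [|j IH]; first by rewrite addn0.
rewrite addnS /=; apply: (le_trans IH); rewrite lerDl.
apply: mulr_ge0; first by case: (b _).
by rewrite exprn_ge0 // ltW // w_gt0.
Qed.

Lemma cs_up b n j : cs b (n + j)%N <= cs b n + (3/2) * (w ^+ n - w ^+ (n + j)%N).
Proof.
elim: j => [|j IH]; first by rewrite addn0 subrr mulr0 addr0.
rewrite addnS /= exprSr.
have y0 : 0 <= w ^+ (n + j)%N by rewrite exprn_ge0 // ltW // w_gt0.
have hb : (b (n + j)%N)%:R <= 1 :> R by case: (b _).
have hb0 : 0 <= (b (n + j)%N)%:R :> R by case: (b _).
have H : (b (n + j)%N)%:R * w ^+ (n + j)%N <= w ^+ (n + j)%N.
  by rewrite -[leRHS]mul1r ler_wpM2r.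
have -> : cs b n + 3 / 2 * (w ^+ n - w ^+ (n + j)%N * w) =
   cs b n + 3/2 * (w ^+ n - w ^+ (n + j)%N) + w ^+ (n + j)%N by field.
lra.
Qed.

Lemma cs_le32 b n : cs b n <= 3/2.
Proof.
have := cs_up b 0 n; rewrite /= add0n expr0 add0r => H; apply: (le_trans H).
have : 0 <= w ^+ n by rewrite exprn_ge0 // ltW // w_gt0.
lra.
Qed.

Definition cr (b : nat -> bool) : R := sup (range (cs b)).

Lemma cr_has_sup b : has_sup (range (cs b)).
Proof.
split; first by exists (cs b 0); exists 0%N.
by exists (3/2) => _ [n _ <-]; exact: cs_le32.
Qed.

Lemma cr_ge b n : cs b n <= cr b.
Proof. by apply: sup_upper_bound; [exact: cr_has_sup | exists n]. Qed.

Lemma cr_le b m : cr b <= cs b m + (3/2) * w ^+ m.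
Proof.
rewrite /cr; apply: ge_sup; first by exists (cs b 0); exists 0%N.
move=> _ [n _ <-].
have w0 : 0 <= w ^+ m by rewrite exprn_ge0 // ltW // w_gt0.
case: (leqP n m) => nm.
  have := cs_mono b n (m - n); rewrite subnKC // => H.
  by apply: (le_trans H); rewrite lerDl; apply: mulr_ge0.
have := cs_up b m (n - m); rewrite subnKC; last exact: ltnW.
move=> H.
have w1 : 0 <= w ^+ n by rewrite exprn_ge0 // ltW // w_gt0.
clear nm; lra.
Qed.

Lemma cs_eq b b' m : (forall k, (k < m)%N -> b k = b' k) -> cs b m = cs b' m.
Proof.
elim: m => [//|m IH] H /=.
by rewrite IH ?H // => k km; apply: H; exact: ltnW.
Qed.

Lemma cr_inj : injective cr.
Proof.
move=> b b' e.
suff H : forall m, forall k, (k < m)%N -> b k = b' k.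
  by apply: funext => k; apply: (H k.+1).
elim=> [//|m IH] k; rewrite ltnS leq_eqVlt => /orP[/eqP -> |]; last exact: IH.
have ecs := @cs_eq b b' m IH.
have wm : 0 < w ^+ m by rewrite exprn_gt0 // w_gt0.
have key : forall c c', cs c m = cs c' m -> c m = true -> c' m = false -> cr c' < cr c.
  move=> c c' ec cm c'm.
  have h1 := cr_ge c m.+1; have h2 := cr_le c' m.+1.
  rewrite /= cm mulr1n mul1r ec in h1.
  rewrite /= c'm mulr0n mul0r addr0 exprSr in h2.
  have e3 : w ^+ m * w = w ^+ m / 3 by [].
  rewrite e3 in h2.
  lra.
case Hb : (b m); case Hb' : (b' m) => //.
  by have := key _ _ ecs Hb Hb'; rewrite e ltxx.
by have := key _ _ (esym ecs) Hb' Hb; rewrite e ltxx.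
Qed.

Lemma R_uncountable : ~ countable [set: R].
Proof.
move=> /countable_injP[i ii].
pose k := fun u => i (cr u).
have ki : injective k.
  by move=> u v /ii; rewrite !inE => /(_ I I) /cr_inj.
pose s := fun n => match pselect (exists u, k u = n) with
  | left h => projT1 (cid h) | right _ => fun _ => false end.
have sk : forall u, s (k u) = u.
  move=> u; rewrite /s; case: pselect => [h|[]]; last by exists u.
  by case: (cid h) => v kv /=; apply: ki.
pose d := fun n => ~~ s n n.
have H := congr1 (fun f => f (k d)) (sk d); simpl in H.
have E : d (k d) = ~~ s (k d) (k d) by [].
by move: H; rewrite E; case: (s (k d) (k d)).
Qed.

Definition rbits (x : R) (n : nat) : bool :=
  if @unpickle rat n is Some q then ratr q < x else false.

Lemma rbits_inj : injective rbits.
Proof.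
suff H : forall x y, x < y -> rbits x <> rbits y.
  move=> x y e; case: (ltgtP x y) => // /H; first by move=> /(_ e).
  by move=> /(_ (esym e)).
move=> x y xy e.
have [q /andP[]] := rat_in_itvoo xy; rewrite !bnd_simp => xq qy.
have := congr1 (fun f => f (pickle q)) e; rewrite /rbits pickleK.
by rewrite qy ltNge (ltW xq).
Qed.

End Card1.

Definition npair (u : nat -> nat -> bool) (m : nat) : bool :=
  if @unpickle (nat * nat)%type m is Some (a, b) then u a b else false.

Lemma npair_inj : injective npair.
Proof.
move=> u v e; apply: funext => a; apply: funext => b.
by have := congr1 (fun f => f (pickle (a, b))) e; rewrite /npair pickleK.
Qed.
Local Open Scope card_scope.

Lemma inj_le {T U} {A : set T} {B : set U} {f : T -> U} :
  {in A &, injective f} -> f @` A `<=` B -> A #<= B.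
Proof.
move=> fi fAB; have := inj_card_eq fi; rewrite card_eq_le => /andP[_ h].
exact: card_le_trans h (subset_card_le fAB).
Qed.

Lemma inj_eq {T U} {A : set T} {f : T -> U} :
  {in A &, injective f} -> A #= f @` A.
Proof. by move=> fi; rewrite card_eq_sym; exact: inj_card_eq. Qed.

Lemma pairP T U (x a : T) (y b : U) : (x, y) = (a, b) -> x = a /\ y = b.
Proof. by case=> -> ->. Qed.

Lemma card_comp (T U : Type) (t0 : T) (u0 : U) (A : set T) (B : set U) :
  (exists f : T -> U, {in A &, injective f} /\ f @` A `<=` B) \/
  (exists g : U -> T, {in B &, injective g} /\ g @` B `<=` A).
Proof.
pose P (G : set (T * U)) :=
  [/\ (forall p, G p -> A p.1 /\ B p.2),
      (forall x y y', G (x, y) -> G (x, y') -> y = y') &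
      (forall x x' y, G (x, y) -> G (x', y) -> x = x')].
have [G [[GAB Gf Gi] Gmax]] : exists G, P G /\ forall B', G `<` B' -> ~ P B'.
  apply: Zorn_bigcup => F FP Ftot; split.
  - by move=> p [X FX Xp]; have [+ _ _] := FP X FX; apply.
  - move=> x y y' [X1 FX1 X1p] [X2 FX2 X2p].
    have [h|h] := Ftot _ _ FX1 FX2.
      by have [_ Hf _] := FP X2 FX2; apply: (Hf x); [exact: h|].
    by have [_ Hf _] := FP X1 FX1; apply: (Hf x); [|exact: h].
  - move=> x x' y [X1 FX1 X1p] [X2 FX2 X2p].
    have [h|h] := Ftot _ _ FX1 FX2.
      by have [_ _ Hi] := FP X2 FX2; apply: (Hi _ _ y); [exact: h|].
    by have [_ _ Hi] := FP X1 FX1; apply: (Hi _ _ y); [|exact: h].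
have [HA|HA] := pselect (forall a, A a -> exists b, G (a, b)).
  left.
  pose f a := match pselect (exists b, G (a, b)) with
    | left h => projT1 (cid h) | right _ => u0 end.
  have fG : forall a, A a -> G (a, f a).
    move=> a Aa; rewrite /f; case: pselect => [h|[]]; last exact: HA.
    by case: (cid h).
  exists f; split.
    by move=> x y; rewrite !inE => Ax Ay e; apply: (Gi x y (f x)); [exact: fG | rewrite e; exact: fG].
  by move=> _ [a Aa <-]; exact: (GAB _ (fG a Aa)).2.
right.
have [a [Aa Na]] : exists a, A a /\ ~ exists b, G (a, b).
  apply: contrapT => H; apply: HA => a' Aa'; apply: contrapT => H'; apply: H.
  by exists a'; split.
have HB : forall b, B b -> exists a', G (a', b).
  move=> b Bb; apply: contrapT => Nb; apply: (Gmax (G `|` [set (a, b)])).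
    split; first by move=> p Gp; left.
    by move=> /(_ (a, b) (or_intror erefl)) Gab; apply: Na; exists b.
  split.
  - by move=> p [/GAB //|->].
  - move=> x y y' [G1|[e1 e2]] [G2|[e3 e4]]; subst.
    + exact: Gf G1 G2.
    + by exfalso; apply: Na; exists y.
    + by exfalso; apply: Na; exists y'.
    + by [].
  - move=> x x' y [G1|[e1 e2]] [G2|[e3 e4]]; subst.
    + exact: Gi G1 G2.
    + by exfalso; apply: Nb; exists x.
    + by exfalso; apply: Nb; exists x'.
    + by [].
pose g b := match pselect (exists a', G (a', b)) with
  | left h => projT1 (cid h) | right _ => t0 end.
have gG : forall b, B b -> G (g b, b).
  move=> b Bb; rewrite /g; case: pselect => [h|[]]; last exact: HB.
  by case: (cid h).
exists g; split.
  by move=> x y; rewrite !inE => Bx By e; apply: (Gf (g x)); [exact: gG | rewrite e; exact: gG].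
by move=> _ [b Bb <-]; exact: (GAB _ (gG b Bb)).1.
Qed.

Lemma aleph1_le_R (R : realType) T (t0 : T) (D : set T) :
  CH R -> card_aleph1 D -> exists f : T -> R, {in D &, injective f}.
Proof.
move=> ch [Dunc Dsub]; apply/pcard_injP.
have [[f [fi fD]]|[g [gi gD]]] := @card_comp _ _ t0 (0 : R) D [set: R].
  exact: inj_le fi fD.
have gunc : ~ countable (g @` [set: R]).
  by rewrite -(eq_countable (inj_eq gi)); exact: (@R_uncountable R).
have := Dsub _ gD gunc; rewrite card_eq_sym => h.
have := card_eq_trans h (card_esym (inj_eq gi)).
by rewrite card_eq_le => /andP[].
Qed.
Lemma omega1_like (T : eqType) : ~ countable [set: T] ->
  exists (lt : T -> T -> Prop) (I : set T),
    [/\ well_founded lt, (forall x y, x <> y -> lt x y \/ lt y x),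
        ~ countable I & forall i, I i -> countable [set j | lt j i]].
Proof.
move=> Tunc; have [wo Hwo] := well_ordering_principle T.
have refl x : wo x x.
  have [|z [[zin zlb] _]] := Hwo (pred1 x); first by exists x; rewrite inE.
  by move: zin; rewrite inE => /eqP ez; move: (zlb x); rewrite ez inE eqxx; apply.
have tot x y : wo x y \/ wo y x.
  have [|z [[zin zlb] _]] := Hwo [pred z | (z == x) || (z == y)].
    by exists x; rewrite inE eqxx.
  move: zin; rewrite inE => /orP[/eqP ez|/eqP ez]; subst z.
    by left; apply: zlb; rewrite inE eqxx orbT.
  by right; apply: zlb; rewrite inE eqxx.
have anti x y : wo x y -> wo y x -> x = y.
  move=> xy yx.
  have [|z [_ zu]] := Hwo [pred z | (z == x) || (z == y)].
    by exists x; rewrite inE eqxx.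
  have ex : z = x.
    apply: zu; split; first by rewrite inE eqxx.
    by move=> u; rewrite inE => /orP[/eqP ->|/eqP ->].
  have ey : z = y.
    apply: zu; split; first by rewrite inE eqxx orbT.
    by move=> u; rewrite inE => /orP[/eqP ->|/eqP ->].
  by rewrite -ex -ey.
pose lt x y := wo x y /\ x <> y.
have wf : well_founded lt.
  move=> x; apply: contrapT => nA.
  have [|z [[zin zlb] _]] := Hwo [pred z | `[< ~ Acc lt z >]].
    by exists x; rewrite inE.
  move: zin; rewrite inE; apply; constructor => y [yz ne].
  apply: contrapT => nAy; apply: ne; apply: anti => //.
  by apply: zlb; rewrite inE.
exists lt.
have ltt x y : x <> y -> lt x y \/ lt y x.
  by move=> ne; case: (tot x y) => h; [left|right]; split => // e; apply: ne.
have [Hc|Hc] := pselect (forall x, countable [set j | lt j x]).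
  by exists [set: T]; split.
have [x0 nx0] : exists x, ~ countable [set j | lt j x].
  by apply: contrapT => H; apply: Hc => x; apply: contrapT => H'; apply: H; exists x.
have [|z [[zin zlb] _]] := Hwo [pred z | `[< ~ countable [set j | lt j z] >]].
  by exists x0; rewrite inE.
move: zin; rewrite inE => zunc.
exists [set j | lt j z]; split => // i [iz ne].
apply: contrapT => H; apply: ne; apply: anti => //.
by apply: zlb; rewrite inE.
Qed.
Section Span.
Variables (R : realType) (X : normedModType R).
Implicit Types (L : set X).

Lemma span0 L : lin_span L 0.
Proof. by exists 0%N, (fun _ => 0), (fun _ => 0); split => [[]//|]; rewrite big_ord0. Qed.

Lemma span_sub L y : L y -> lin_span L y.
Proof.
move=> Ly; exists 1%N, (fun _ => y), (fun _ => 1); split => // .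
by rewrite big_ord1 scale1r.
Qed.

Lemma span_lin L a x y : lin_span L x -> lin_span L y -> lin_span L (a *: x + y).
Proof.
move=> [n [v [c [Lv ->]]]] [m [u [d [Lu ->]]]].
exists (n + m)%N.
exists (fun k => match fintype.split k with inl i => v i | inr j => u j end).
exists (fun k => match fintype.split k with inl i => a * c i | inr j => d j end).
split.
  by move=> k; case: (fintype.split k).
rewrite big_split_ord scaler_sumr; congr (_ + _); apply: eq_bigr => i _.
  have := unsplitK (inl i : 'I_n + 'I_m) => /= ->.
  by rewrite scalerA.
by have := unsplitK (inr i : 'I_n + 'I_m) => /= ->.
Qed.

End Span.
Section HB.
Variables (R : realType) (X : normedModType R).

Definition goodG (G : set (X * R)) :=
  [/\ G (0, 0),
      (forall x a b, G (x, a) -> G (x, b) -> a = b),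
      (forall t x a y b, G (x, a) -> G (y, b) -> G (t *: x + y, t * a + b)) &
      (forall x a, G (x, a) -> a <= `|x|)].

Lemma goodG_scale {G} t {x a} : goodG G -> G (x, a) -> G (t *: x, t * a).
Proof.
move=> [G0 _ Gc _] Gxa; have := Gc t _ _ _ _ Gxa G0.
by rewrite addr0 addr0.
Qed.

Lemma goodG_sub {G x a y b} : goodG G -> G (x, a) -> G (y, b) -> G (x - y, a - b).
Proof.
move=> [_ _ Gc _] Gxa Gyb; have := Gc (-1) _ _ _ _ Gyb Gxa.
by rewrite scaleN1r mulN1r addrC [- b + a]addrC.
Qed.

Lemma goodG_ext G z : goodG G -> ~ (exists a, G (z, a)) ->
  exists c, goodG [set q | exists y b t, G (y, b) /\ q = (y + t *: z, b + t * c)].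
Proof.
move=> gG nz; have [G0 Gf Gc Gd] := gG.
pose E := [set r | exists y b, G (y, b) /\ r = b - `|y - z|].
have Eub : forall y b, G (y, b) -> ubound E (`|y + z| - b).
  move=> y b Gyb _ [y' [b' [Gyb' ->]]].
  have := Gd _ _ (Gc 1 _ _ _ _ Gyb Gyb'); rewrite scale1r mul1r => H.
  have T := ler_normD (y + z) (y' - z).
  have e : y + z + (y' - z) = y + y' by rewrite -addrA [z + _]addrC subrK.
  rewrite e in T.
  lra.
have E0 : E (0 - `|0 - z|) by exists 0, 0.
have hs : has_sup E by split; [exists (0 - `|0 - z|) | exists (`|0 + z| - 0); exact: Eub G0].
pose c := sup E.
have cge : forall y b, G (y, b) -> b - `|y - z| <= c.
  by move=> y b Gyb; apply: sup_upper_bound => //; exists y, b.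
have cle : forall y b, G (y, b) -> c <= `|y + z| - b.
  by move=> y b Gyb; apply: ge_sup; [exists (0 - `|0 - z|) | exact: Eub].
exists c; split.
- by exists 0, 0, 0; split => //; rewrite scale0r mul0r !addr0.
- move=> x a a' [y [b [t [Gyb [-> ->]]]]] [y' [b' [t' [Gyb' [ex ->]]]]].
  have tt : t = t'.
    apply: contrapT => ne; apply: nz.
    have ne' : t - t' != 0 by rewrite subr_eq0; apply/eqP.
    exists ((t - t')^-1 * (b' - b)).
    have -> : z = (t - t')^-1 *: (y' - y).
      have h : (t - t') *: z = y' - y.
        by rewrite scalerBl; apply: (addrI y); rewrite addrA ex addrK addrC subrK.
      by rewrite -h scalerA mulVf // scale1r.
    exact: (goodG_scale _ gG (goodG_sub gG Gyb' Gyb)).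
  subst t'.
  have ey : y = y' by apply: (addIr (t *: z)).
  subst y'; by rewrite (Gf _ _ _ Gyb Gyb').
- move=> s x a x' a' [y [b [t [Gyb [-> ->]]]]] [y' [b' [t' [Gyb' [-> ->]]]]].
  exists (s *: y + y'), (s * b + b'), (s * t + t'); split; first exact: Gc.
  congr pair; last by ring.
  by rewrite scalerDr scalerA scalerDl addrACA.
- move=> x a [y [b [t [Gyb [-> ->]]]]].
  case: (ltgtP t 0) => [tneg|tpos|->]; last first.
  + by rewrite scale0r mul0r !addr0; exact: Gd.
  + have := cle _ _ (goodG_scale t^-1 gG Gyb).
    have -> : y + t *: z = t *: (t^-1 *: y + z).
      by rewrite scalerDr scalerA mulfV ?gt_eqF // scale1r.
    rewrite normrZ gtr0_norm //.
    set N := `|_| => H.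
    have H2 : t * c <= t * (N - t^-1 * b) by rewrite ler_wpM2l // ltW.
    have e2 : t * (N - t^-1 * b) = t * N - b by rewrite mulrBr mulrA mulfV ?gt_eqF // mul1r.
    lra.
  + pose s := - t; have spos : 0 < s by rewrite /s oppr_gt0.
    have := cge _ _ (goodG_scale s^-1 gG Gyb).
    have -> : y + t *: z = s *: (s^-1 *: y - z).
      by rewrite scalerDr scalerA mulfV ?gt_eqF // scale1r scalerN /s scaleNr opprK.
    rewrite normrZ gtr0_norm //.
    set N := `|_| => H.
    have H2 : s * (s^-1 * b - N) <= s * c by rewrite ler_wpM2l // ltW.
    have e2 : s * (s^-1 * b - N) = b - s * N by rewrite mulrBr mulrA mulfV ?gt_eqF // mul1r.
    rewrite /s in e2 H2 *.
    lra.
Qed.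

End HB.
Arguments goodG {R X}.
Arguments goodG_ext {R X G z}.
Arguments goodG_scale {R X G} t {x a}.
Arguments goodG_sub {R X G x a y b}.
Section HB2.
Variables (R : realType) (X : normedModType R).

Lemma HB_graph (G0 : set (X * R)) : goodG G0 ->
  exists f : X -> R, [/\ (forall a x y, f (a *: x + y) = a * f x + f y),
    (forall x, f x <= `|x|) & (forall x a, G0 (x, a) -> f x = a)].
Proof.
move=> gG0.
pose P G := G = set0 \/ (goodG G /\ G0 `<=` G).
have [G [PG Gmax]] : exists G, P G /\ forall B, G `<` B -> ~ P B.
  apply: Zorn_bigcup => F FP Ftot.
  have Fgood : forall Y p, F Y -> Y p -> goodG Y /\ G0 `<=` Y.
    by move=> Y p FY Yp; case: (FP Y FY) => // e; rewrite e in Yp.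
  have [[p [Y FY Yp]]|H] := pselect (exists p, (\bigcup_(Y in F) Y) p); last first.
    left; apply/seteqP; split => [p Up|//]; apply: H; by exists p.
  have [[gY0 _ _ _] G0Y] := Fgood _ _ FY Yp.
  right; split; last by move=> q G0q; exists Y => //; exact: G0Y.
  split.
  - by exists Y.
  - move=> x a b [Y1 FY1 Y1a] [Y2 FY2 Y2b].
    have [h|h] := Ftot _ _ FY1 FY2.
      by have [[_ Gf _ _] _] := Fgood _ _ FY2 Y2b; apply: (Gf x) => //; exact: h.
    by have [[_ Gf _ _] _] := Fgood _ _ FY1 Y1a; apply: (Gf x) => //; exact: h.
  - move=> t x a y b [Y1 FY1 Y1a] [Y2 FY2 Y2b].
    have [h|h] := Ftot _ _ FY1 FY2.
      have [[_ _ Gc _] _] := Fgood _ _ FY2 Y2b; exists Y2 => //.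
      by apply: Gc => //; exact: h.
    have [[_ _ Gc _] _] := Fgood _ _ FY1 Y1a; exists Y1 => //.
    by apply: Gc => //; exact: h.
  - move=> x a [Y1 FY1 Y1a].
    by have [[_ _ _ Gd] _] := Fgood _ _ FY1 Y1a; exact: Gd.
have [gG G0G] : goodG G /\ G0 `<=` G.
  case: PG => // G0e; exfalso; apply: (Gmax G0); last by right; split.
  rewrite G0e; split => // H; have [g00 _ _ _] := gG0.
  exact: (H _ g00).
have [Gz Gf Gc Gd] := gG.
have tot : forall z, exists a, G (z, a).
  move=> z; apply: contrapT => nz.
  have [c gc] := goodG_ext gG nz.
  apply: (Gmax _ _ (or_intror (conj gc _))).
    split.
      move=> [y b] Gyb; exists y, b, 0; split => //.
      by rewrite scale0r mul0r !addr0.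
    move=> /(_ (z, c)) H; apply: nz; exists c; apply: H.
    by exists 0, 0, 1; rewrite scale1r mul1r !add0r.
  move=> [y b] G0yb; exists y, b, 0; split; first exact: G0G.
  by rewrite scale0r mul0r !addr0.
pose f x := xget 0 [set a | G (x, a)].
have fG : forall x, G (x, f x) by move=> x; exact: (xgetPex 0 (tot x)).
exists f; split.
- by move=> a x y; apply: (Gf (a *: x + y)) => //; apply: Gc.
- by move=> x; apply: Gd.
- by move=> x a G0xa; apply: (Gf x) => //; exact: G0G.
Qed.

End HB2.
Arguments HB_graph {R X G0}.
Section Sep.
Variables (R : realType) (X : normedModType R).

Lemma sep_functional (L : set X) : ~ linearly_dense L ->
  exists f, bounded_linear_functional f /\ (exists x, f x != 0) /\
    (forall y, L y -> f y = 0).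
Proof.
move=> nd.
have [x0 nx0] : exists x0, ~ closure (lin_span L) x0.
  apply: contrapT => H; apply: nd; apply/seteqP; split => // x _.
  by apply: contrapT => h; apply: H; exists x.
have [B [nB dis]] : exists B, nbhs x0 B /\ ~ (lin_span L `&` B !=set0).
  apply: contrapT => H; apply: nx0 => B nB; apply: contrapT => h; apply: H.
  by exists B.
move/nbhs_ballP: nB => [e /= e0 he].
have far : forall m, lin_span L m -> e <= `|x0 - m|.
  move=> m Lm; rewrite leNgt; apply/negP => h; apply: dis; exists m; split => //.
  by apply: he; rewrite -ball_normE /ball_ /=.
pose G0 := [set q | exists m t, lin_span L m /\ q = (m + t *: x0, t * e)].
have gG0 : goodG G0.
  split.
  - by exists 0, 0; split; [exact: span0 | rewrite scale0r mul0r addr0].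
  - move=> x a b [m [t [Lm [-> ->]]]] [m' [t' [Lm' [ex ->]]]].
    suff -> : t = t' by [].
    apply: contrapT => ne.
    have ne' : t - t' != 0 by rewrite subr_eq0; apply/eqP.
    have h : (t - t') *: x0 = m' - m.
      by rewrite scalerBl; apply: (addrI m); rewrite addrA ex addrK addrC subrK.
    have : lin_span L x0.
      have -> : x0 = (t - t')^-1 *: (m' - m) + 0.
        by rewrite addr0 -h scalerA mulVf // scale1r.
      apply: span_lin; last exact: span0.
      by rewrite addrC -scaleN1r; apply: span_lin.
    move=> /far; rewrite subrr normr0 => e0'.
    by move: e0; rewrite ltNge e0'.
  - move=> s x a x' a' [m [t [Lm [-> ->]]]] [m' [t' [Lm' [-> ->]]]].
    exists (s *: m + m'), (s * t + t'); split; first exact: span_lin.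
    congr pair; last by ring.
    by rewrite scalerDr scalerA scalerDl addrACA.
  - move=> x a [m [t [Lm [-> ->]]]].
    case: (leP t 0) => tpos.
      exact: le_trans (mulr_le0_ge0 tpos (ltW e0)) (normr_ge0 _).
    have -> : m + t *: x0 = t *: (x0 - ((- t^-1) *: m + 0)).
      by rewrite addr0 scalerDr scalerN scalerA mulrN mulfV ?gt_eqF // scaleN1r opprK addrC.
    rewrite normrZ gtr0_norm //; apply: ler_wpM2l; first exact: ltW.
    by apply: far; apply: span_lin => //; exact: span0.
have [f [flin fdom fG0]] := HB_graph gG0.
have f0 : f 0 = 0.
  by apply: fG0; exists 0, 0; split; [exact: span0 | rewrite scale0r mul0r addr0].
exists f; split; last split.
- split => //; exists 1 => x; rewrite mul1r ler_norml fdom andbT.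
  have := fdom (- x); rewrite normrN.
  have -> : f (- x) = - f x.
    by have := flin (-1) x 0; rewrite addr0 f0 addr0 scaleN1r mulN1r.
  by rewrite lerNl.
- exists x0; rewrite (fG0 x0 e) ?gt_eqF //.
  by exists 0, 1; split; [exact: span0 | rewrite scale1r mul1r add0r].
- move=> y Ly; apply: fG0; exists y, 0; split; first exact: span_sub.
  by rewrite scale0r mul0r addr0.
Qed.

End Sep.
Arguments sep_functional {R X L}.
Local Open Scope card_scope.

Lemma countableU T (A B : set T) : countable A -> countable B -> countable (A `|` B).
Proof.
move=> cA cB.
have sub : A `|` B `<=` \bigcup_(i in [set: bool]) (if i then A else B).
  by move=> x [Ax|Bx]; [exists true | exists false].
apply: sub_countable (subset_card_le sub) _.
by apply: bigcup_countable; [exact: countableP | case].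
Qed.

Definition pick {T} (d : T) (P : T -> Prop) : T :=
  match pselect (exists x, P x) with left h => projT1 (cid h) | right _ => d end.

Lemma pickP {T} (d : T) (P : T -> Prop) : (exists x, P x) -> P (pick d P).
Proof. by move=> h; rewrite /pick; case: pselect => [h'|//]; case: (cid h'). Qed.

Lemma small_le0 (R : realType) (a b : R) : 0 <= b ->
  (forall n : nat, a <= b / (n.+1)%:R) -> a <= 0.
Proof.
move=> b0 H; rewrite leNgt; apply/negP => a0.
have := @archi_boundP _ (b / a) (divr_ge0 b0 (ltW a0)).
set N := Num.Def.archi_bound _ => hN.
have := H N; rewrite ler_pdivlMr ?ltr0Sn // => h1.
move: hN; rewrite ltr_pdivrMr // => h2.
have : (N%:R : R) <= (N.+1)%:R by rewrite ler_nat.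
move=> h3.
have h4 : N%:R * a <= (N.+1)%:R * a by rewrite ler_wpM2r // ltW.
lra.
Qed.
Section Main.
Variables (R : realType) (X : normedModType R).
Local Notation blf := (@bounded_linear_functional R X).
Definition Fs : set (X -> R) := [set f | blf f /\ exists x, f x != 0].

Lemma span1 (y m : X) : lin_span [set y] m -> exists t, m = t *: y.
Proof.
move=> [n [v [c [Lv ->]]]]; exists (\sum_(i < n) c i).
by rewrite scaler_suml; apply: eq_bigr => i _; rewrite (Lv i).
Qed.

Lemma point_hyp : dens_aleph1 X -> forall y : X, exists f, Fs f /\ f y = 0.
Proof.
move=> [_ nsep] y.
have nd : ~ linearly_dense [set y].
  move=> ld; apply: nsep.
  exists [set ratr q *: y | q in [set: rat]]; split; last first.
    by apply: sub_countable (card_image_le _ _) _; exact: countableP.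
  apply/seteqP; split => // x _ B /nbhs_ballP [e /= e0 he].
  have e20 : 0 < e / 2 by rewrite divr_gt0.
  have : closure (lin_span [set y]) x by rewrite ld.
  move=> /(_ _ (nbhsx_ballx x _ e20)) [m [/span1 [t ->] bm]].
  move: bm; rewrite -ball_normE /ball_ /= => bm.
  have [y0|yn0] := eqVneq y 0.
    exists (ratr 0 *: y); split; first by exists 0.
    apply: he; rewrite -ball_normE /ball_ /=; move: bm; rewrite y0 !scaler0.
    move=> bm; lra.
  have ny0 : 0 < `|y| by rewrite normr_gt0.
  pose d := e / 2 / `|y|.
  have d0 : 0 < d by rewrite divr_gt0.
  have : t - d < t + d by lra.
  move=> /rat_in_itvoo [q /andP[]]; rewrite !bnd_simp => h1 h2.
  exists (ratr q *: y); split; first by exists q.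
  apply: he; rewrite -ball_normE /ball_ /=.
  have T := ler_normD (x - t *: y) (t *: y - ratr q *: y).
  rewrite addrA subrK -scalerBl normrZ in T.
  have hq : `|t - ratr q| < d by rewrite ltr_norml; apply/andP; split; lra.
  have hq2 : `|t - ratr q| * `|y| < d * `|y| by rewrite ltr_pM2r.
  have ed : d * `|y| = e / 2 by rewrite /d mulfVK ?gt_eqF.
  lra.
have [f [bf [[x fx] fL]]] := sep_functional nd.
exists f; split; [split => //; by exists x | exact: fL].
Qed.

Lemma F_uncountable : dual_dens_aleph1 X -> ~ countable Fs.
Proof.
move=> [_ nd] cF; apply: nd.
exists (Fs `|` [set (fun _ => 0)]); split; last by apply: countableU => //; exact: countable1.
split.
  move=> f [[]//|->]; split; first by move=> a x y; rewrite mulr0 addr0.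
  by exists 0 => x; rewrite normr0 mul0r.
move=> f bf e e0.
have [[x fx]|H] := pselect (exists x, f x != 0).
  exists f; first by left; split => //; exists x.
  by move=> z; rewrite subrr normr0 mulr_ge0 // ltW.
exists (fun _ => 0); first by right.
move=> z; have -> : f z = 0 by apply: contrapT => h; apply: H; exists z; apply/eqP.
by rewrite subrr normr0 mulr_ge0 // ltW.
Qed.

Lemma F_le_R : CH R -> dual_dens_aleph1 X ->
  exists c : (X -> R) -> R, {in Fs &, injective c}.
Proof.
move=> ch [[Dd [[Dblf Ddens] Dal]] _].
have [del deli] := @aleph1_le_R R _ (fun _ => 0) Dd ch Dal.
pose s f n := pick (fun _ => 0) [set g | Dd g /\ forall x, `|f x - g x| <= ((n.+1)%:R)^-1 * `|x|].
have sP : forall f, blf f -> forall n, Dd (s f n) /\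
    forall x, `|f x - s f n x| <= ((n.+1)%:R)^-1 * `|x|.
  move=> f bf n.
  have [|g Dg hg] := Ddens f bf ((n.+1)%:R)^-1; first by rewrite invr_gt0 ltr0Sn.
  exact: (@pickP _ (fun _ => 0) (fun g => Dd g /\ forall x, `|f x - g x| <= ((n.+1)%:R)^-1 * `|x|) (ex_intro _ g (conj Dg hg))).
exists (fun f => @cr R (npair (fun n => @rbits R (del (s f n))))).
move=> f f'; rewrite !inE => -[bf _] [bf' _] /(@cr_inj R) /npair_inj ee.
apply: funext => x.
have hn : forall n, s f n = s f' n.
  move=> n; have := congr1 (fun u => u n) ee => /= /(@rbits_inj R).
  by apply: deli; rewrite inE; [exact: (sP f bf n).1 | exact: (sP f' bf' n).1].
apply/eqP; rewrite -subr_eq0 -normr_eq0 eq_le normr_ge0 andbT.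
apply: (@small_le0 R _ (2 * `|x|)); first by rewrite mulr_ge0.
move=> n.
have h1 := (sP f bf n).2 x; have h2 := (sP f' bf' n).2 x; rewrite hn in h1.
have T := ler_normD (f x - s f' n x) (s f' n x - f' x).
rewrite addrA subrK [`|s f' n x - f' x|]distrC in T.
have -> : 2 * `|x| / (n.+1)%:R = 2 * (((n.+1)%:R)^-1 * `|x|) by rewrite -mulrA [`|x| * _]mulrC.
move: (`|f x - s f' n x|) (`|f' x - s f' n x|) (((n.+1)%:R)^-1 * `|x|) h1 h2 T => u v w h1 h2 T.
lra.
Qed.

Lemma avoid (C : set X) :
  ~ (exists H : nat -> set X, (forall n, hyperplane (H n)) /\ C `<=` \bigcup_n H n) ->
  (exists phi, Fs phi) ->
  forall T (J : set T) (h : T -> X -> R), countable J -> (forall j, J j -> Fs (h j)) ->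
  exists x, C x /\ forall j, J j -> h j x != 0.
Proof.
move=> nc [phi Fphi] T J h /countable_injP [io ioi] Fh; apply: contrapT => nx; apply: nc.
pose H n := match pselect (exists j, J j /\ io j = n) with
  | left hh => [set x | h (projT1 (cid hh)) x = 0] | right _ => [set x | phi x = 0] end.
exists H; split.
  move=> n; rewrite /H; case: pselect => [hh|_].
    case: (cid hh) => j [Jj _] /=; have [bf nz] := Fh j Jj.
    by exists (h j); split.
  by have [bf nz] := Fphi; exists phi; split.
move=> x Cx.
have [j [Jj hj]] : exists j, J j /\ h j x = 0.
  apply: contrapT => K; apply: nx; exists x; split => // j Jj; apply/eqP => e.
  by apply: K; exists j.
exists (io j) => //; rewrite /H; case: pselect => [hh|[]]; last by exists j.
case: (cid hh) => j' [Jj' ej'] /=.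
by have := ioi j' j; rewrite !inE => /(_ Jj' Jj ej') ->.
Qed.

End Main.
Arguments point_hyp {R X}.
Arguments F_uncountable {R X}.
Arguments F_le_R {R X}.
Arguments avoid {R X C}.
Arguments Fs {R X}.
Lemma pick_cases {T} (d : T) (P : T -> Prop) : P (pick d P) \/ pick d P = d.
Proof. by rewrite /pick; case: pselect => [h|_]; [left; case: (cid h) | right]. Qed.

Theorem theorem3p1 (R : realType) (X : completeNormedModType R) (C : set X) :
  CH R ->
  dens_aleph1 X ->
  dual_dens_aleph1 X ->
  ~ (exists H : nat -> set X, (forall n, hyperplane (H n)) /\
       C `<=` \bigcup_n H n) ->
  exists S, S `<=` C /\ overcomplete S.
Proof.
move=> ch dX dXs nc.
have ptH := point_hyp dX.
have [phi [Fphi _]] := ptH 0.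
have [io ioi] := F_le_R ch dXs.
have Runc := @R_uncountable R.
have [lt [I [wf ltt Iunc Icnt]]] := @omega1_like R Runc.
have IR : (I #= [set: R])%card by case: (ch I).
have FleI : (@Fs R X #<= I)%card.
  have h1 : (@Fs R X #<= [set: R])%card := inj_le ioi (fun _ _ => Logic.I).
  apply: card_le_trans h1 _.
  by move: IR; rewrite card_eq_le => /andP[].
have [jo joF joi] : exists2 jo, set_fun (@Fs R X) I jo & set_inj (@Fs R X) jo.
  by apply/injfunPex; apply/pcard_leP.
pose e i := pick phi (fun f => Fs f /\ jo f = i).
have eF : forall i, Fs (e i).
  by move=> i; rewrite /e; case: (pick_cases phi (fun f => Fs f /\ jo f = i)) => [[]|->].
have ejo : forall f, Fs f -> e (jo f) = f.
  move=> f Ff; have [Fe je] := @pickP _ phi (fun f' => Fs f' /\ jo f' = jo f) (ex_intro _ f (conj Ff erefl)).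
  by apply: joi; rewrite ?inE.
pose k y := pick phi (fun f => Fs f /\ f y = 0).
have kP : forall y, Fs (k y) /\ k y y = 0.
  by move=> y; apply: (@pickP _ phi (fun f => Fs f /\ f y = 0)); exact: ptH.
pose step i (rec : forall j, lt j i -> X) : X := pick 0 (fun x => C x /\
  (forall j, I j -> lt j i \/ j = i -> e j x != 0) /\
  (forall j (hj : lt j i), I j -> k (rec j hj) x != 0)).
pose g := Fix wf (fun _ => X) step.
have g_eq : forall i, g i = step i (fun j _ => g j).
  move=> i; rewrite /g Fix_eq // => i' f1 f2 H.
  have -> // : f1 = f2.
  by apply: functional_extensionality_dep => j; apply: functional_extensionality_dep => hj.
have gP : forall i, I i -> C (g i) /\ (forall j, I j -> lt j i \/ j = i -> e j (g i) != 0) /\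
    (forall j, I j -> lt j i -> k (g j) (g i) != 0).
  move=> i Ii.
  pose J := [set p : R * bool | I p.1 /\ (if p.2 then lt p.1 i \/ p.1 = i else lt p.1 i)].
  pose h (p : R * bool) := if p.2 then e p.1 else k (g p.1).
  have cJ : countable J.
    have sub : J `<=` ([set j | lt j i] `|` [set i]) `*` [set: bool].
      move=> [j b] [Ij hb]; simpl in Ij, hb; split => //=.
      by case: b hb => /= [[hh|hh]|hh]; [left|right|left].
    apply: sub_countable (subset_card_le sub) _.
    apply: countableX; [apply: countableU; [exact: Icnt | exact: countable1] | exact: countableP].
  have Fh : forall p, J p -> Fs (h p).
    by move=> [j [|]] _ /=; [exact: eF | exact: (kP _).1].
  have [x [Cx hx]] := avoid nc (ex_intro _ phi Fphi) _ _ _ cJ Fh.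
  have ex : exists x, C x /\ (forall j, I j -> lt j i \/ j = i -> e j x != 0) /\
      (forall j (hj : lt j i), I j -> k (g j) x != 0).
    exists x; split => //; split.
      by move=> j Ij hj; apply: (hx (j, true)).
    by move=> j hj Ij; apply: (hx (j, false)).
  rewrite g_eq /step /=.
  have [Cy [H1 H2]] := @pickP _ 0 _ ex.
  by split => //; split => // j Ij hj; exact: H2 j hj Ij.
have ginj : {in I &, injective g}.
  move=> i j; rewrite !inE => Ii Ij gij; apply: contrapT => ne.
  case: (ltt _ _ ne) => hh.
    have := (gP j Ij).2.2 i Ii hh; rewrite gij (kP _).2 eqxx; by [].
  have := (gP i Ii).2.2 j Ij hh; rewrite gij (kP _).2 eqxx; by [].
pose S := g @` I.
exists S; split; first by move=> _ [i Ii <-]; exact: (gP i Ii).1.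
have SI : (S #= I)%card := inj_card_eq ginj.
have Sunc : ~ countable S by rewrite (eq_countable SI).
have kerS : forall f, Fs f -> countable (S `&` [set x | f x = 0]).
  move=> f Ff; have Ii0 : I (jo f) := joF f Ff.
  have sub : S `&` [set x | f x = 0] `<=` g @` [set j | lt j (jo f)].
    move=> _ [[j Ij <-] fj]; exists j => //=.
    apply: contrapT => hh.
    have H := (gP j Ij).2.1 (jo f) Ii0; rewrite ejo // in H.
    have : lt (jo f) j \/ jo f = j.
      have [->|ne] := pselect (jo f = j); first by right.
      by case: (ltt _ _ ne) => // ?; left.
    by move/H; rewrite /= fj eqxx.
  apply: sub_countable (subset_card_le sub) _.
  exact: sub_countable (card_image_le _ _) (Icnt _ Ii0).
split.
  split => // B BS Bunc.
  pose B' := I `&` (g @^-1` B).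
  have eB : g @` B' = B.
    apply/seteqP; split => [_ [i [Ii Bg] <-]//|x Bx].
    by have [i Ii gi] := BS x Bx; exists i => //; split => //=; rewrite gi.
  have gi' : {in B' &, injective g}.
    by move=> a b; rewrite !inE => -[Ia _] [Ib _]; apply: ginj; rewrite inE.
  have BB' : (B #= B')%card by rewrite -{1}eB; exact: inj_card_eq gi'.
  have B'unc : ~ countable B' by rewrite -(eq_countable BB').
  have B'R : (B' #= [set: R])%card by case: (ch B').
  exact: card_eq_trans BB' (card_eq_trans B'R (card_esym (card_eq_trans SI IR))).
move=> L LS LSeq; apply: contrapT => nd.
have [f [bf [nz fL]]] := sep_functional nd.
have sub : L `<=` S `&` [set x | f x = 0] by move=> x Lx; split; [exact: LS | exact: fL].
have Lc := sub_countable (subset_card_le sub) (kerS f (conj bf nz)).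
by apply: Sunc; rewrite -(eq_countable LSeq).
Qed.
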